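(* Let $1<p<\infty$, let $\alpha\in SOS(\mathbb{R}_+)$, and let $\omega$ be its exponent function, i.e. $\alpha(t)=te^{\omega(t)}$. Then the function $\mathfrak c(t,x):=e^{i\omega(t)(x+i/p)}r_p(x)$, $(t,x)\in\mathbb{R}_+\times\mathbb{R}$, belongs to $C_b(\mathbb{R}_+,V(\mathbb{R}))$.
   Context: $\mathbb{R}_+=(0,\infty)$. $SO(\mathbb{R}_+)$: bounded continuous complex $f$ on $\mathbb{R}_+$ with $\lim_{r\to s}\sup\{|f(t)-f(\tau)|:t,\tau\in[\lambda r,r]\}=0$ for $s\in\{0,\infty\}$ and each (equivalently some) $\lambda\in(0,1)$. $SOS(\mathbb{R}_+)$: orientation-preserving diffeomorphisms $\alpha$ of $\mathbb{R}_+$ onto itself with no fixed points in $\mathbb{R}_+$ such that $\log\alpha'$ is bounded continuous and $\alpha'\in SO(\mathbb{R}_+)$; for such $\alpha$ the exponent function $\omega(t)=\log[\alpha(t)/t]$ is real-valued and lies in $SO(\mathbb{R}_+)$. $r_p(x)=1/\sinh[\pi(x+i/p)]$. $V(\mathbb{R})$ is the Banach algebra of absolutely continuous functions of finite total variation on $\mathbb{R}$ with norm $\|a\|_V=\|a\|_{L^\infty(\mathbb{R})}+\int_{\mathbb{R}}|a'(x)|dx$; $C_b(\mathbb{R}_+,V(\mathbb{R}))$ is the Banach algebra of bounded continuous maps $t\mapsto\mathfrak a(t,\cdot)$ from $\mathbb{R}_+$ to $V(\mathbb{R})$ with norm $\sup_t\|\mathfrak a(t,\cdot)\|_V$. *)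

(* Defs.v *)
From Stdlib Require Import Reals Lra List Sorted.
From Coquelicot Require Import Coquelicot.
Open Scope R_scope.

Definition Cexp (z : C) : C :=
  (exp (Re z) * cos (Im z), exp (Re z) * sin (Im z)).
Definition Csinh (z : C) : C := Cmult (RtoC (/ 2)) (Cminus (Cexp z) (Cexp (Copp z))).

Definition r_p (p x : R) : C :=
  Cinv (Csinh (Cmult (RtoC PI) (Cplus (RtoC x) (Cmult Ci (RtoC (/ p)))))).

Definition SO (f : R -> C) : Prop :=
  (exists M, forall t, 0 < t -> Cmod (f t) <= M) /\
  (forall t, 0 < t -> continuous f t) /\
  (forall lam, 0 < lam < 1 -> forall eps, 0 < eps ->
     exists delta, 0 < delta /\ forall r, 0 < r < delta ->
       forall t tau, lam * r <= t <= r -> lam * r <= tau <= r ->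
         Cmod (Cminus (f t) (f tau)) <= eps) /\
  (forall lam, 0 < lam < 1 -> forall eps, 0 < eps ->
     exists N, forall r, N < r ->
       forall t tau, lam * r <= t <= r -> lam * r <= tau <= r ->
         Cmod (Cminus (f t) (f tau)) <= eps).

Definition SOS (alpha : R -> R) : Prop :=
  (forall t, 0 < t -> 0 < alpha t) /\
  (forall s t, 0 < s -> s < t -> alpha s < alpha t) /\
  (forall t, 0 < t -> ex_derive alpha t /\ continuous (Derive alpha) t) /\
  (exists beta : R -> R,
     (forall t, 0 < t -> 0 < beta t /\ alpha (beta t) = t /\ beta (alpha t) = t) /\
     (forall t, 0 < t -> ex_derive beta t /\ continuous (Derive beta) t)) /\
  (forall t, 0 < t -> alpha t <> t) /\
  (forall t, 0 < t -> 0 < Derive alpha t) /\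
  (exists M, forall t, 0 < t -> Rabs (ln (Derive alpha t)) <= M) /\
  (forall t, 0 < t -> continuous (fun s => ln (Derive alpha s)) t) /\
  SO (fun t => RtoC (Derive alpha t)).

Definition exponent (alpha : R -> R) (t : R) : R := ln (alpha t / t).

Fixpoint var_sum (g : R -> C) (x : R) (l : list R) : R :=
  match l with
  | nil => 0
  | y :: l' => Cmod (Cminus (g y) (g x)) + var_sum g y l'
  end.

Definition total_variation (g : R -> C) : Rbar :=
  Lub_Rbar (fun v => exists x0 l, Sorted Rlt (x0 :: l) /\ v = var_sum g x0 l).

Definition sup_norm (g : R -> C) : Rbar :=
  Lub_Rbar (fun v => exists x, v = Cmod (g x)).

Fixpoint disjoint_chain (l : list (R * R)) : Prop :=
  match l with
  | nil => True
  | (a, b) :: l' =>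
      a < b /\
      (match l' with nil => True | (a', _) :: _ => b <= a' end) /\
      disjoint_chain l'
  end.

Definition total_length (l : list (R * R)) : R :=
  fold_right (fun ab s => snd ab - fst ab + s) 0 l.

Definition total_increment (g : R -> C) (l : list (R * R)) : R :=
  fold_right (fun ab s => Cmod (Cminus (g (snd ab)) (g (fst ab))) + s) 0 l.

Definition absolutely_continuous (g : R -> C) : Prop :=
  forall eps, 0 < eps -> exists delta, 0 < delta /\
    forall l, disjoint_chain l -> total_length l < delta ->
      total_increment g l < eps.

Definition in_V (g : R -> C) : Prop :=
  absolutely_continuous g /\ is_finite (total_variation g).

(* ||a||_V = ||a||_infty + int |a'| ; for a in V(R), int |a'| = total variation *)
Definition V_norm (g : R -> C) : Rbar := Rbar_plus (sup_norm g) (total_variation g).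

Definition in_Cb_V (c : R -> R -> C) : Prop :=
  (forall t, 0 < t -> in_V (c t)) /\
  (exists M, forall t, 0 < t -> Rbar_le (V_norm (c t)) (Finite M)) /\
  (forall t, 0 < t -> forall eps, 0 < eps -> exists delta, 0 < delta /\
     forall s, 0 < s -> Rabs (s - t) < delta ->
       Rbar_lt (V_norm (fun x => Cminus (c s x) (c t x))) (Finite eps)).

(* Main.v *)
Require Import Defs.
From Stdlib Require Import Reals Lra List Sorted FunctionalExtensionality.
From Coquelicot Require Import Coquelicot.
Open Scope R_scope.

Lemma mono_deriv (f df : R -> R) :
  (forall x, is_derive f x (df x)) -> (forall x, 0 <= df x) ->
  forall x y, x <= y -> f x <= f y.
Proof.
  intros Hd Hp x y Hxy.
  destruct (MVT_gen f x y df) as [c [Hc Heq]].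
  - intros z _; apply Hd.
  - intros z _. apply continuity_pt_filterlim.
    apply (ex_derive_continuous f z). eexists; apply Hd.
  - assert (0 <= df c * (y - x)) by (apply Rmult_le_pos; auto; lra). lra.
Qed.

Lemma atan_deriv x : is_derive atan x (/ (1 + x ^ 2)).
Proof. apply is_derive_Reals, derivable_pt_lim_atan. Qed.

Lemma inv1x2_pos x : 0 < / (1 + x ^ 2).
Proof. apply Rinv_0_lt_compat. nra. Qed.

Lemma inv1x2_le1 x : / (1 + x ^ 2) <= 1.
Proof.
  rewrite <- Rinv_1. apply Rinv_le_contravar; nra.
Qed.

Lemma atan_lip x y : x <= y -> atan y - atan x <= y - x.
Proof.
  intros H.
  assert (Hm := mono_deriv (fun z => z - atan z) (fun z => 1 - / (1 + z^2))).

  assert (x - atan x <= y - atan y); [|lra].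
  apply Hm; auto.
  - intros z. apply (is_derive_minus (fun z => z) atan z 1 (/ (1 + z^2))). apply (@is_derive_id R_AbsRing). apply atan_deriv.
  - intros z. pose proof (inv1x2_le1 z). lra.
Qed.

Lemma var_bound_real (F dF : R -> R) (K : R) :
  (forall x, is_derive F x (dF x)) ->
  (forall x, Rabs (dF x) <= K * / (1 + x ^ 2)) ->
  forall x y, x <= y -> Rabs (F y - F x) <= K * (atan y - atan x).
Proof.
  intros Hd Hb x y Hxy.
  assert (H1 := mono_deriv (fun z => K * atan z - F z) (fun z => K * / (1 + z^2) - dF z)).
  assert (H2 := mono_deriv (fun z => K * atan z + F z) (fun z => K * / (1 + z^2) + dF z)).
  assert (A1 : K * atan x - F x <= K * atan y - F y).
  { apply H1; auto.
    - intros z. apply (is_derive_minus (fun z => K * atan z) F z (K * / (1 + z^2)) (dF z)); auto.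
      apply (is_derive_scal atan z K (/ (1 + z^2))). apply atan_deriv.
    - intros z. specialize (Hb z). apply Rabs_le_between in Hb. lra. }
  assert (A2 : K * atan x + F x <= K * atan y + F y).
  { apply H2; auto.
    - intros z. apply (is_derive_plus (fun z => K * atan z) F z (K * / (1 + z^2)) (dF z)); auto.
      apply (is_derive_scal atan z K (/ (1 + z^2))). apply atan_deriv.
    - intros z. specialize (Hb z). apply Rabs_le_between in Hb. lra. }
  apply Rabs_le_between. lra.
Qed.

Lemma Cmod_le_sum (z : C) : Cmod z <= Rabs (fst z) + Rabs (snd z).
Proof.
  unfold Cmod. rewrite <- (sqrt_pow2 (Rabs (fst z) + Rabs (snd z))).
  2: { pose proof (Rabs_pos (fst z)); pose proof (Rabs_pos (snd z)); lra. }
  apply sqrt_le_1_alt.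
  pose proof (Rabs_pos (fst z)); pose proof (Rabs_pos (snd z)).
  rewrite <- (pow2_abs (fst z)), <- (pow2_abs (snd z)). nra.
Qed.

Definition mkC (g1 g2 : R -> R) : R -> C := fun x => (g1 x, g2 x).

Section Var.
Variables (g : R -> C) (dg1 dg2 : R -> R) (K : R).
Hypothesis Hd1 : forall x, is_derive (fun y => fst (g y)) x (dg1 x).
Hypothesis Hd2 : forall x, is_derive (fun y => snd (g y)) x (dg2 x).
Hypothesis Hb1 : forall x, Rabs (dg1 x) <= K * / (1 + x ^ 2).
Hypothesis Hb2 : forall x, Rabs (dg2 x) <= K * / (1 + x ^ 2).

Lemma incr_bound x y : x <= y -> Cmod (Cminus (g y) (g x)) <= 2 * K * (atan y - atan x).
Proof.
  intros H.
  eapply Rle_trans. apply Cmod_le_sum.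
  pose proof (var_bound_real _ _ K Hd1 Hb1 x y H).
  pose proof (var_bound_real _ _ K Hd2 Hb2 x y H).
  simpl in *. unfold Rminus in *. lra.
Qed.

Lemma var_sum_bound x l : Sorted Rlt (x :: l) -> var_sum g x l <= 2 * K * (PI / 2 - atan x).
Proof.
  revert x. induction l as [|y l IH]; intros x Hs; simpl.
  - pose proof (atan_bound x). assert (0 <= K).
    { pose proof (Hb1 0). pose proof (Rabs_pos (dg1 0)). pose proof (inv1x2_pos 0).
      destruct (Rle_or_lt 0 K); auto. nra. }
    nra.
  - apply Sorted_inv in Hs. destruct Hs as [Hs Hr]. inversion Hr; subst.
    pose proof (IH y Hs). pose proof (incr_bound x y (Rlt_le _ _ H0)). lra.
Qed.

Lemma K_nonneg : 0 <= K.
Proof.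
  pose proof (Hb1 0). pose proof (Rabs_pos (dg1 0)). pose proof (inv1x2_pos 0).
  destruct (Rle_or_lt 0 K); auto. nra.
Qed.

Lemma var_sum_bound' x l : Sorted Rlt (x :: l) -> var_sum g x l <= 2 * K * PI.
Proof.
  intros H. pose proof (var_sum_bound x l H). pose proof (atan_bound x).
  pose proof K_nonneg. nra.
Qed.

Lemma incr_lip x y : x <= y -> Cmod (Cminus (g y) (g x)) <= 2 * K * (y - x).
Proof.
  intros H. pose proof (incr_bound x y H). pose proof (atan_lip x y H).
  pose proof K_nonneg. nra.
Qed.

Lemma total_incr_bound l : disjoint_chain l -> total_increment g l <= 2 * K * total_length l.
Proof.
  induction l as [|[a b] l IH]; simpl; intros H.
  - lra.
  - destruct H as [Hab [_ Hl]]. pose proof (IH Hl).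
    pose proof (incr_lip a b (Rlt_le _ _ Hab)). lra.
Qed.
End Var.

Lemma lub_fin (E : R -> Prop) (v0 B : R) :
  E v0 -> (forall v, E v -> v <= B) ->
  exists r, Lub_Rbar E = Finite r /\ r <= B.
Proof.
  intros H0 HB. destruct (Lub_Rbar_correct E) as [Hub Hl].
  assert (A1 : Rbar_le (Finite v0) (Lub_Rbar E)) by (apply Hub; auto).
  assert (A2 : Rbar_le (Lub_Rbar E) (Finite B)).
  { apply Hl. intros v Hv. simpl. apply HB; auto. }
  destruct (Lub_Rbar E) as [r| |]; simpl in *; try contradiction.
  exists r; split; auto.
Qed.

Section VB.
Variables (g : R -> C) (dg1 dg2 : R -> R) (K B : R).
Hypothesis Hd1 : forall x, is_derive (fun y => fst (g y)) x (dg1 x).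
Hypothesis Hd2 : forall x, is_derive (fun y => snd (g y)) x (dg2 x).
Hypothesis Hb1 : forall x, Rabs (dg1 x) <= K * / (1 + x ^ 2).
Hypothesis Hb2 : forall x, Rabs (dg2 x) <= K * / (1 + x ^ 2).
Hypothesis HB : forall x, Cmod (g x) <= B.

Lemma TV_fin : exists r, total_variation g = Finite r /\ r <= 2 * K * PI.
Proof.
  apply (lub_fin _ 0).
  - exists 0, nil. split. constructor; constructor. reflexivity.
  - intros v [x0 [l [Hs ->]]]. eapply var_sum_bound'; eauto.
Qed.

Lemma sup_fin : exists r, sup_norm g = Finite r /\ r <= B.
Proof.
  apply (lub_fin _ (Cmod (g 0))).
  - exists 0. reflexivity.
  - intros v [x ->]. auto.
Qed.

Lemma V_bound : in_V g /\ Rbar_le (V_norm g) (Finite (B + 2 * K * PI)).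
Proof.
  destruct TV_fin as [r1 [E1 H1]]. destruct sup_fin as [r2 [E2 H2]].
  split.
  - split.
    + intros eps Heps. assert (0 <= K) by (eapply K_nonneg; exact Hb1).
      exists (eps / (2 * K + 1)). split.
      * apply Rdiv_lt_0_compat; lra.
      * intros l Hl Hlen. assert (total_increment g l <= 2 * K * total_length l) by (eapply total_incr_bound; eauto).
        assert (0 <= total_length l).
        { clear -Hl. induction l as [|[a b] l IH]; simpl in *; [lra|].
          destruct Hl as [Ha [_ Hb]]. pose proof (IH Hb). lra. }
        assert (total_length l * (2 * K + 1) < eps).
        { apply (Rmult_lt_compat_r (2*K+1)) in Hlen; [|lra].
          unfold Rdiv in Hlen. rewrite Rmult_assoc, Rinv_l in Hlen; lra. }
        nra.
    + rewrite E1. reflexivity.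
  - unfold V_norm. rewrite E1, E2. simpl. lra.
Qed.
End VB.

Lemma gen1 N q c e : 0 < q -> 0 < c -> Rabs N <= c * e -> c * Rabs (N / q) <= e * (c^2 / q).
Proof.
  intros Hq Hc HN. unfold Rdiv. rewrite Rabs_mult, (Rabs_inv q), (Rabs_pos_eq q) by lra.
  assert (0 < /q) by (apply Rinv_0_lt_compat; lra).
  assert (c * (Rabs N * /q) = (c * Rabs N) * /q) by ring. rewrite H0.
  assert (e * (c^2 * /q) = (c * (c * e)) * /q) by ring. rewrite H1.
  apply Rmult_le_compat_r; [lra|]. apply Rmult_le_compat_l; lra.
Qed.
Lemma gen2 N q c e1 e2 : 0 < q -> 0 < c -> Rabs N <= c * e1 * q + c^3 * e2 ->
  c * Rabs (N / q ^ 2) <= e1 * (c^2 / q) + e2 * (c^2/q)^2.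
Proof.
  intros Hq Hc HN. unfold Rdiv. rewrite Rabs_mult, (Rabs_inv (q^2)), (Rabs_pos_eq (q^2)) by (apply pow_le; lra).
  assert (0 < /q^2) by (apply Rinv_0_lt_compat; apply pow_lt; lra).
  assert (c * (Rabs N * /q^2) = (c * Rabs N) * /q^2) by ring. rewrite H0.
  assert (e1 * (c^2 * /q) + e2 * (c^2 * /q)^2 = (c * (c * e1 * q + c^3 * e2)) * /q^2).
  { field. lra. } rewrite H1.
  apply Rmult_le_compat_r; [lra|]. apply Rmult_le_compat_l; lra.
Qed.
Lemma gen3 q c s : 0 < s -> 0 < c -> s^2 * c^2 <= q -> c^2 / q <= / s^2.
Proof.
  intros Hs Hc H. assert (0 < s^2*c^2) by (apply Rmult_lt_0_compat; apply pow_lt; lra).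
  unfold Rdiv. apply (Rmult_le_reg_l (s^2 * q)). apply Rmult_lt_0_compat; [apply pow_lt|]; lra.
  replace (s ^ 2 * q * (c ^ 2 * / q)) with (s^2 * c^2) by (field; lra).
  replace (s ^ 2 * q * / s^2) with q by (field; lra). lra.
Qed.

Section RP.
Variable p : R.
Hypothesis Hp : 1 < p.

Definition sv := sin (PI / p).
Definition kv := cos (PI / p).
Definition sh x := (exp (PI * x) - exp (- (PI * x))) / 2.
Definition ch x := (exp (PI * x) + exp (- (PI * x))) / 2.
Definition Dn x := (sh x * kv) ^ 2 + (ch x * sv) ^ 2.
Definition r1 x := sh x * kv / Dn x.
Definition r2 x := - (ch x * sv) / Dn x.
Definition dD x := 2 * (sh x * kv) * (PI * ch x * kv) + 2 * (ch x * sv) * (PI * sh x * sv).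
Definition dr1 x := (PI * ch x * kv * Dn x - sh x * kv * dD x) / (Dn x) ^ 2.
Definition dr2 x := - ((PI * sh x * sv * Dn x - ch x * sv * dD x) / (Dn x) ^ 2).

Lemma sv_pos : 0 < sv.
Proof.
  unfold sv. apply sin_gt_0.
  - apply Rdiv_lt_0_compat; [apply PI_RGT_0|lra].
  - pose proof PI_RGT_0. unfold Rdiv. rewrite <- (Rmult_1_r PI) at 2.
    apply Rmult_lt_compat_l; auto. rewrite <- Rinv_1. apply Rinv_lt_contravar; lra.
Qed.

Lemma sv_le1 : sv <= 1.
Proof. unfold sv. pose proof (SIN_bound (PI/p)). lra. Qed.

Lemma ks1 : kv ^ 2 + sv ^ 2 = 1.
Proof. unfold kv, sv. pose proof (sin2_cos2 (PI/p)). unfold Rsqr in H. nra. Qed.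

Lemma exp_prod x : exp (PI * x) * exp (- (PI * x)) = 1.
Proof. rewrite <- exp_plus. replace (PI * x + - (PI * x)) with 0 by ring. apply exp_0. Qed.

Lemma ch_sh x : ch x ^ 2 - sh x ^ 2 = 1.
Proof. unfold ch, sh. rewrite <- (exp_prod x). field. Qed.

Lemma ch_ge1 x : 1 <= ch x.
Proof.
  unfold ch. pose proof (exp_prod x).
  pose proof (exp_pos (PI * x)). pose proof (exp_pos (- (PI * x))).
  set (a := exp (PI * x)) in *. set (b := exp (- (PI * x))) in *.
  assert (4 <= (a + b) ^ 2) by (pose proof (pow2_ge_0 (a - b)); nra). nra.
Qed.

Lemma sh_le_ch x : Rabs (sh x) <= ch x.
Proof.
  unfold ch, sh. pose proof (exp_pos (PI * x)). pose proof (exp_pos (- (PI * x))).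
  apply Rabs_le_between. split; lra.
Qed.

Lemma Dn_ge x : sv ^ 2 * ch x ^ 2 <= Dn x.
Proof.
  unfold Dn. pose proof ks1. pose proof (ch_sh x). pose proof (ch_ge1 x).
  assert (kv^2 <= kv^2 * ch x ^2) by nra. nra.
Qed.

Lemma Dn_pos x : 0 < Dn x.
Proof.
  pose proof (Dn_ge x). pose proof sv_pos. pose proof (ch_ge1 x).
  assert (0 < sv^2 * ch x ^2) by (apply Rmult_lt_0_compat; apply pow_lt; lra). lra.
Qed.

Lemma is_derive_sh x : is_derive sh x (PI * ch x).
Proof. unfold sh, ch. auto_derive; auto. field. Qed.
Lemma is_derive_ch x : is_derive ch x (PI * sh x).
Proof. unfold sh, ch. auto_derive; auto. field. Qed.

Lemma is_derive_Dn x : is_derive Dn x (dD x).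
Proof.
  unfold Dn, dD.
  pose proof (is_derive_sh x). pose proof (is_derive_ch x).
  auto_derive.
  - split; [eexists; exact H|split; [eexists; exact H0|exact I]].
  - replace (Derive (fun x0 : R => sh x0) x) with (PI * ch x) by (symmetry; apply is_derive_unique; auto).
    replace (Derive (fun x0 : R => ch x0) x) with (PI * sh x) by (symmetry; apply is_derive_unique; auto). ring.
Qed.

Lemma is_derive_r1 x : is_derive r1 x (dr1 x).
Proof.
  unfold r1, dr1. apply (is_derive_div (fun y => sh y * kv) Dn x).
  - apply (is_derive_scal_l sh x (PI * ch x) kv). apply is_derive_sh.
  - apply is_derive_Dn.
  - pose proof (Dn_pos x). lra.
Qed.

Lemma is_derive_r2 x : is_derive r2 x (dr2 x).
Proof.
  replace (dr2 x) with (((- (PI * sh x * sv)) * Dn x - (- (ch x * sv)) * dD x) / Dn x ^ 2).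
  2: { unfold dr2. pose proof (Dn_pos x). field. lra. }
  unfold r2. apply (is_derive_div (fun y => - (ch y * sv)) Dn x).
  - apply (is_derive_opp (fun y => ch y * sv) x (PI * sh x * sv)).
    apply (is_derive_scal_l ch x (PI * sh x) sv). apply is_derive_ch.
  - apply is_derive_Dn.
  - pose proof (Dn_pos x). lra.
Qed.


Definition Sig x := Rabs (r1 x) + Rabs (r2 x) + Rabs (dr1 x) + Rabs (dr2 x).
Definition KR := (2 + 2 * PI) * / sv ^ 2 + 4 * PI * / sv ^ 4.

Lemma dD_eq x : dD x = 2 * PI * sh x * ch x.
Proof. unfold dD. pose proof ks1. replace (2 * PI * sh x * ch x) with (2 * PI * sh x * ch x * 1) by ring.
  rewrite <- H. ring. Qed.

Lemma kv_le1 : Rabs kv <= 1.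
Proof. unfold kv. apply Rabs_le_between. pose proof (COS_bound (PI/p)). lra. Qed.

Lemma ch_Sig x : ch x * Sig x <= KR.
Proof.
  pose proof (ch_ge1 x) as Hc. pose proof (Dn_pos x) as Hq. pose proof sv_pos as Hs.
  pose proof sv_le1. pose proof kv_le1. pose proof (sh_le_ch x) as Hsh.
  pose proof PI_RGT_0.
  assert (HT : ch x ^ 2 / Dn x <= / sv ^ 2) by (apply gen3; auto; try lra; apply Dn_ge).
  assert (HT0 : 0 <= ch x ^ 2 / Dn x) by (apply Rdiv_le_0_compat; [apply pow_le|]; lra).
  set (T := ch x ^ 2 / Dn x) in *.
  assert (A1 : ch x * Rabs (r1 x) <= 1 * T).
  { apply gen1; try lra. rewrite Rabs_mult. rewrite Rmult_1_r.
    pose proof (Rabs_pos (sh x)). pose proof (Rabs_pos kv). nra. }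
  assert (A2 : ch x * Rabs (r2 x) <= 1 * T).
  { apply gen1; try lra. rewrite Rabs_Ropp, Rabs_mult, (Rabs_pos_eq (ch x)), (Rabs_pos_eq sv); nra. }
  assert (A3 : ch x * Rabs (dr1 x) <= PI * T + 2 * PI * T ^ 2).
  { apply gen2; try lra. rewrite dD_eq.
    eapply Rle_trans. apply Rabs_triang. rewrite Rabs_Ropp.
    rewrite !Rabs_mult. rewrite (Rabs_pos_eq PI), (Rabs_pos_eq (ch x)), (Rabs_pos_eq (Dn x)), (Rabs_pos_eq 2) by lra.
    pose proof (Rabs_pos (sh x)). pose proof (Rabs_pos kv).
    assert (Rabs kv * Dn x <= Dn x) by nra.
    assert (Rabs (sh x) * Rabs kv <= ch x) by nra.
    assert (Rabs (sh x) * ch x <= ch x * ch x) by nra.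
    assert (PI * ch x * Rabs kv * Dn x <= ch x * PI * Dn x).
    { replace (PI * ch x * Rabs kv * Dn x) with ((PI * ch x) * (Rabs kv * Dn x)) by ring.
      replace (ch x * PI * Dn x) with ((PI * ch x) * Dn x) by ring.
      apply Rmult_le_compat_l; nra. }
    assert (Rabs (sh x) * Rabs kv * (2 * PI * Rabs (sh x) * ch x) <= ch x ^ 3 * (2 * PI)).
    { replace (Rabs (sh x) * Rabs kv * (2 * PI * Rabs (sh x) * ch x)) with
        ((Rabs (sh x) * Rabs kv) * (Rabs (sh x) * ch x) * (2 * PI)) by ring.
      apply Rmult_le_compat_r; [lra|]. replace (ch x ^ 3) with (ch x * (ch x * ch x)) by ring.
      apply Rmult_le_compat; nra. }
    lra. }
  assert (A4 : ch x * Rabs (dr2 x) <= PI * T + 2 * PI * T ^ 2).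
  { unfold dr2. rewrite Rabs_Ropp. apply gen2; try lra. rewrite dD_eq.
    eapply Rle_trans. apply Rabs_triang. rewrite Rabs_Ropp.
    rewrite !Rabs_mult. rewrite (Rabs_pos_eq PI), (Rabs_pos_eq (ch x)), (Rabs_pos_eq (Dn x)), (Rabs_pos_eq 2), (Rabs_pos_eq sv) by lra.
    pose proof (Rabs_pos (sh x)).
    assert (PI * Rabs (sh x) * sv * Dn x <= ch x * PI * Dn x).
    { replace (PI * Rabs (sh x) * sv * Dn x) with ((Rabs (sh x) * sv) * (PI * Dn x)) by ring.
      replace (ch x * PI * Dn x) with (ch x * (PI * Dn x)) by ring.
      apply Rmult_le_compat_r; nra. }
    assert (ch x * sv * (2 * PI * Rabs (sh x) * ch x) <= ch x ^ 3 * (2 * PI)).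
    { replace (ch x * sv * (2 * PI * Rabs (sh x) * ch x)) with
        ((sv * Rabs (sh x)) * (ch x * ch x) * (2 * PI)) by ring.
      replace (ch x ^ 3 * (2 * PI)) with (ch x * (ch x * ch x) * (2 * PI)) by ring.
      apply Rmult_le_compat_r; [lra|]. apply Rmult_le_compat_r; nra. }
    lra. }
  unfold Sig, KR.
  assert (T ^ 2 <= / sv ^ 4).
  { replace (/ sv ^ 4) with ((/ sv ^ 2) ^ 2) by (field; lra). apply pow_incr; lra. }
  nra.
Qed.

Lemma W_le_ch x : (1 + Rabs x) * (1 + x ^ 2) <= 16 * ch x.
Proof.
  assert (Hy : forall y, 0 <= y -> (1 + y) * (1 + y ^ 2) <= 8 * exp (PI * y)).
  { intros y Hy. pose proof PI2_1.
    assert (E : exp (PI * y) = exp (PI * y / 4) ^ 4).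
    { simpl. rewrite Rmult_1_r, <- !exp_plus. f_equal. field. }
    pose proof (exp_ineq1_le (PI * y / 4)).
    assert (1 + y / 2 <= exp (PI * y / 4)) by nra.
    assert ((1 + y/2) ^ 4 <= exp (PI * y / 4) ^ 4) by (apply pow_incr; lra).
    assert ((1 + y) * (1 + y ^ 2) <= 8 * (1 + y / 2) ^ 4).
    { assert (0 <= y^2) by nra. assert (0 <= y^3) by (apply pow_le; lra).
      assert (0 <= y^4) by (apply pow_le; lra). nra. }
    lra. }
  unfold ch. pose proof (exp_pos (PI * x)). pose proof (exp_pos (- (PI * x))).
  destruct (Rle_or_lt 0 x).
  - rewrite Rabs_pos_eq by lra. specialize (Hy x H1). lra.
  - rewrite Rabs_left by lra. specialize (Hy (- x) ltac:(lra)).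
    replace ((- x) ^ 2) with (x ^ 2) in Hy by ring.
    replace (PI * - x) with (- (PI * x)) in Hy by ring. lra.
Qed.

Lemma Sig_decay x : (1 + Rabs x) * Sig x <= 16 * KR * / (1 + x ^ 2).
Proof.
  pose proof (W_le_ch x). pose proof (ch_Sig x). pose proof (ch_ge1 x).
  assert (0 <= Sig x) by (unfold Sig; pose proof (Rabs_pos (r1 x)); pose proof (Rabs_pos (r2 x));
     pose proof (Rabs_pos (dr1 x)); pose proof (Rabs_pos (dr2 x)); lra).
  assert (0 < 1 + x^2) by nra.
  apply (Rmult_le_reg_r (1 + x ^ 2)); auto.
  replace (16 * KR * / (1 + x ^ 2) * (1 + x ^ 2)) with (16 * KR) by (field; lra).
  replace ((1 + Rabs x) * Sig x * (1 + x ^ 2)) with (((1 + Rabs x) * (1 + x^2)) * Sig x) by ring.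
  apply Rle_trans with (16 * ch x * Sig x). apply Rmult_le_compat_r; lra. nra.
Qed.

End RP.

Section Phi.
Variable p : R.
Hypothesis Hp : 1 < p.
Variables (A B C D : R -> R).

Definition Phi b x := exp (- (b * / p)) * (cos (b * x) * (A x + b * B x) + sin (b * x) * (C x + b * D x)).
Definition dPhi b x :=
  exp (- (b * / p)) * (- / p * (cos (b * x) * (A x + b * B x) + sin (b * x) * (C x + b * D x))
   + (- x * sin (b * x) * (A x + b * B x) + cos (b * x) * B x
      + x * cos (b * x) * (C x + b * D x) + sin (b * x) * D x)).
Definition SA x := Rabs (A x) + Rabs (B x) + Rabs (C x) + Rabs (D x).

Lemma is_derive_Phi b x : is_derive (fun b => Phi b x) b (dPhi b x).
Proof. unfold Phi, dPhi. auto_derive; auto. ring. Qed.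

Lemma exp_le' x y : x <= y -> exp x <= exp y.
Proof. intros [H|H]. left; apply exp_increasing; auto. subst; lra. Qed.

Lemma exp_bound b M : Rabs b <= M -> exp (- (b * / p)) <= exp (M * / p).
Proof.
  intros H. assert (0 < / p) by (apply Rinv_0_lt_compat; lra).
  apply exp_le'. apply Rabs_le_between in H. nra.
Qed.

Lemma uv_bound b M x : Rabs b <= M ->
  Rabs (A x + b * B x) + Rabs (C x + b * D x) <= (1 + M) * SA x.
Proof.
  intros H. unfold SA.
  pose proof (Rabs_triang (A x) (b * B x)). pose proof (Rabs_triang (C x) (b * D x)).
  rewrite Rabs_mult in *. pose proof (Rabs_pos b).
  pose proof (Rabs_pos (A x)). pose proof (Rabs_pos (B x)).
  pose proof (Rabs_pos (C x)). pose proof (Rabs_pos (D x)).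
  assert (Rabs b * Rabs (B x) <= M * Rabs (B x)) by nra.
  assert (Rabs b * Rabs (D x) <= M * Rabs (D x)) by nra.
  assert (0 <= M) by lra. nra.
Qed.

Lemma cs_bound c s u v : Rabs c <= 1 -> Rabs s <= 1 -> Rabs (c * u + s * v) <= Rabs u + Rabs v.
Proof.
  intros Hc Hs. eapply Rle_trans. apply Rabs_triang. rewrite !Rabs_mult.
  pose proof (Rabs_pos u). pose proof (Rabs_pos v). pose proof (Rabs_pos c). pose proof (Rabs_pos s). nra.
Qed.

Lemma Rabs_cos_le y : Rabs (cos y) <= 1.
Proof. apply Rabs_le_between. pose proof (COS_bound y). lra. Qed.
Lemma Rabs_sin_le y : Rabs (sin y) <= 1.
Proof. apply Rabs_le_between. pose proof (SIN_bound y). lra. Qed.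

Lemma SA_pos x : 0 <= SA x.
Proof. unfold SA. pose proof (Rabs_pos (A x)). pose proof (Rabs_pos (B x)).
  pose proof (Rabs_pos (C x)). pose proof (Rabs_pos (D x)). lra. Qed.

Lemma Phi_bound b M x : Rabs b <= M -> Rabs (Phi b x) <= exp (M * / p) * (1 + M) * SA x.
Proof.
  intros H. unfold Phi. rewrite Rabs_mult, Rabs_pos_eq by (left; apply exp_pos).
  pose proof (exp_bound b M H). pose proof (exp_pos (- (b * / p))).
  pose proof (uv_bound b M x H).
  pose proof (cs_bound (cos (b * x)) (sin (b * x)) (A x + b * B x) (C x + b * D x)
     (Rabs_cos_le _) (Rabs_sin_le _)).
  pose proof (SA_pos x). pose proof (Rabs_pos b).
  rewrite Rmult_assoc. apply Rmult_le_compat; try lra. apply Rabs_pos.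
Qed.

Definition LM M := exp (M * / p) * ((1 + M) * / p + 2 * (1 + M) + 1).

Lemma dPhi_bound b M x : Rabs b <= M -> Rabs (dPhi b x) <= LM M * ((1 + Rabs x) * SA x).
Proof.
  intros H. unfold dPhi, LM. rewrite Rabs_mult, Rabs_pos_eq by (left; apply exp_pos).
  pose proof (exp_bound b M H). pose proof (exp_pos (- (b * / p))).
  pose proof (uv_bound b M x H).
  set (u := A x + b * B x) in *. set (v := C x + b * D x) in *.
  pose proof (cs_bound (cos (b * x)) (sin (b * x)) u v (Rabs_cos_le _) (Rabs_sin_le _)).
  pose proof (SA_pos x). pose proof (Rabs_pos b). pose proof (Rabs_pos x).
  assert (Hip : 0 < / p) by (apply Rinv_0_lt_compat; lra).
  assert (Hip1 : / p <= 1) by (rewrite <- Rinv_1; apply Rinv_le_contravar; lra).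
  set (IN := - / p * (cos (b * x) * u + sin (b * x) * v) +
    (- x * sin (b * x) * u + cos (b * x) * B x + x * cos (b * x) * v + sin (b * x) * D x)).
  assert (HIN : Rabs IN <= ((1 + M) * / p + 2 * (1 + M) + 1) * ((1 + Rabs x) * SA x)).
  { unfold IN.
    assert (E1 : Rabs (- / p * (cos (b * x) * u + sin (b * x) * v)) <= / p * ((1 + M) * SA x)).
    { rewrite Rabs_mult, Rabs_Ropp, Rabs_pos_eq by lra. apply Rmult_le_compat_l; lra. }
    assert (E2 : Rabs (- x * sin (b * x) * u + x * cos (b * x) * v) <= Rabs x * ((1 + M) * SA x)).
    { replace (- x * sin (b * x) * u + x * cos (b * x) * v) with
        (x * (- sin (b * x) * u + cos (b * x) * v)) by ring.
      rewrite Rabs_mult. apply Rmult_le_compat_l; [lra|].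
      eapply Rle_trans. apply cs_bound. rewrite Rabs_Ropp. apply Rabs_sin_le. apply Rabs_cos_le. lra. }
    assert (E3 : Rabs (cos (b * x) * B x + sin (b * x) * D x) <= SA x).
    { eapply Rle_trans. apply cs_bound; [apply Rabs_cos_le|apply Rabs_sin_le].
      unfold SA. pose proof (Rabs_pos (A x)). pose proof (Rabs_pos (C x)). lra. }
    replace (- / p * (cos (b * x) * u + sin (b * x) * v) +
      (- x * sin (b * x) * u + cos (b * x) * B x + x * cos (b * x) * v + sin (b * x) * D x))
    with (- / p * (cos (b * x) * u + sin (b * x) * v) +
      ((- x * sin (b * x) * u + x * cos (b * x) * v) + (cos (b * x) * B x + sin (b * x) * D x))) by ring.
    eapply Rle_trans. apply Rabs_triang.
    eapply Rle_trans. apply Rplus_le_compat_l. apply Rabs_triang.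
    assert (0 <= M) by lra.
    assert (/ p * ((1 + M) * SA x) <= (1 + M) * / p * ((1 + Rabs x) * SA x)).
    { replace ((1 + M) * / p * ((1 + Rabs x) * SA x)) with (/ p * ((1 + M) * SA x) + Rabs x * (/ p * ((1 + M) * SA x))) by ring.
      assert (0 <= Rabs x * (/ p * ((1 + M) * SA x))). { apply Rmult_le_pos; auto. apply Rmult_le_pos; try lra. apply Rmult_le_pos; lra. }
      lra. }
    assert (Rabs x * ((1 + M) * SA x) <= 2 * (1 + M) * ((1 + Rabs x) * SA x)).
    { assert (0 <= (1+M) * SA x) by (apply Rmult_le_pos; lra). nra. }
    assert (SA x <= 1 * ((1 + Rabs x) * SA x)) by nra.
    lra. }
  fold IN. rewrite Rmult_assoc. apply Rmult_le_compat; try lra. apply Rabs_pos.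
Qed.

Lemma Phi_lip b b' M x : Rabs b <= M -> Rabs b' <= M ->
  Rabs (Phi b' x - Phi b x) <= Rabs (b' - b) * (LM M * ((1 + Rabs x) * SA x)).
Proof.
  intros Hb Hb'.
  destruct (MVT_gen (fun b => Phi b x) b b' (fun b => dPhi b x)) as [c [Hc Heq]].
  - intros z _. apply is_derive_Phi.
  - intros z _. apply continuity_pt_filterlim.
    apply (ex_derive_continuous (fun b => Phi b x) z). eexists; apply is_derive_Phi.
  - rewrite Heq, Rabs_mult, Rmult_comm. apply Rmult_le_compat_l. apply Rabs_pos.
    apply dPhi_bound. apply Rabs_le_between in Hb. apply Rabs_le_between in Hb'.
    apply Rabs_le_between. unfold Rmin, Rmax in Hc. destruct (Rle_dec b b'); lra.
Qed.
End Phi.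

Definition z0 (p : R) : R -> R := fun _ => 0.
Definition G1 p a x := Phi p (r1 p) (z0 p) (fun y => - r2 p y) (z0 p) a x.
Definition G2 p a x := Phi p (r2 p) (z0 p) (r1 p) (z0 p) a x.
Definition dG1 p a x := Phi p (dr1 p) (fun y => - r2 p y) (fun y => - dr2 p y) (fun y => - r1 p y) a x.
Definition dG2 p a x := Phi p (dr2 p) (r1 p) (dr1 p) (fun y => - r2 p y) a x.

Lemma Csinh_eq p x : Csinh (Cmult (RtoC PI) (Cplus (RtoC x) (Cmult Ci (RtoC (/ p))))) = (sh x * kv p, ch x * sv p).
Proof.
  unfold Csinh, Cexp, sh, ch, sv, kv.
  unfold Cmult, Cminus, Cplus, Copp, Ci, RtoC, Re, Im. simpl.
  rewrite cos_neg, sin_neg.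
  replace (PI * (x + (0 * / p - 1 * 0)) - 0 * (0 + (0 * 0 + 1 * / p))) with (PI * x) by ring.
  replace (PI * (0 + (0 * 0 + 1 * / p)) + 0 * (x + (0 * / p - 1 * 0))) with (PI / p) by (unfold Rdiv; ring).
  f_equal; field.
Qed.

Lemma rp_eq p x : r_p p x = (r1 p x, r2 p x).
Proof. unfold r_p. rewrite Csinh_eq. reflexivity. Qed.

Lemma c_eq p a x :
  Cmult (Cexp (Cmult (Cmult Ci (RtoC a)) (Cplus (RtoC x) (Cmult Ci (RtoC (/ p))))))
        (r_p p x) = (G1 p a x, G2 p a x).
Proof.
  rewrite rp_eq. unfold G1, G2, Phi, z0, Cexp.
  unfold Cmult, Cplus, Ci, RtoC, Re, Im. simpl.
  replace ((0 * a - 1 * 0) * (x + (0 * / p - 1 * 0)) - (0 * 0 + 1 * a) * (0 + (0 * 0 + 1 * / p)))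
    with (- (a * / p)) by ring.
  replace ((0 * a - 1 * 0) * (0 + (0 * 0 + 1 * / p)) + (0 * 0 + 1 * a) * (x + (0 * / p - 1 * 0)))
    with (a * x) by ring.
  f_equal; ring.
Qed.

Lemma is_derive_G1 p a x (Hp : 1 < p) : is_derive (fun y => G1 p a y) x (dG1 p a x).
Proof.
  unfold G1, dG1, Phi, z0.
  pose proof (is_derive_r1 p Hp x) as H1. pose proof (is_derive_r2 p Hp x) as H2.
  auto_derive.
  - repeat split; eexists; eauto.
  - replace (Derive (fun x0 : R => r1 p x0) x) with (dr1 p x) by (symmetry; apply is_derive_unique; auto).
    replace (Derive (fun x0 : R => r2 p x0) x) with (dr2 p x) by (symmetry; apply is_derive_unique; auto).
    ring.
Qed.

Lemma is_derive_G2 p a x (Hp : 1 < p) : is_derive (fun y => G2 p a y) x (dG2 p a x).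
Proof.
  unfold G2, dG2, Phi, z0.
  pose proof (is_derive_r1 p Hp x) as H1. pose proof (is_derive_r2 p Hp x) as H2.
  auto_derive.
  - repeat split; eexists; eauto.
  - replace (Derive (fun x0 : R => r1 p x0) x) with (dr1 p x) by (symmetry; apply is_derive_unique; auto).
    replace (Derive (fun x0 : R => r2 p x0) x) with (dr2 p x) by (symmetry; apply is_derive_unique; auto).
    ring.
Qed.

Section Bnds.
Variable p : R.
Hypothesis Hp : 1 < p.
Variables (M : R).

Lemma Sig_nonneg x : 0 <= Sig p x.
Proof. unfold Sig. pose proof (Rabs_pos (r1 p x)); pose proof (Rabs_pos (r2 p x));
  pose proof (Rabs_pos (dr1 p x)); pose proof (Rabs_pos (dr2 p x)); lra. Qed.

Lemma Sig_d1 x : Sig p x <= 16 * KR p * / (1 + x ^ 2).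
Proof. pose proof (Sig_decay p Hp x). pose proof (Sig_nonneg x). pose proof (Rabs_pos x). nra. Qed.

Lemma inv1_le x : / (1 + x ^ 2) <= 1.
Proof. rewrite <- Rinv_1. apply Rinv_le_contravar; nra. Qed.

Lemma KR_nonneg : 0 <= 16 * KR p.
Proof. pose proof (Sig_d1 0). pose proof (Sig_nonneg 0).
  assert (0 < / (1 + 0 ^ 2)) by (apply Rinv_0_lt_compat; nra). nra. Qed.

Lemma Sig_d2 x : Sig p x <= 16 * KR p.
Proof. pose proof (Sig_d1 x). pose proof (inv1_le x). pose proof KR_nonneg.
  assert (0 < / (1 + x ^ 2)) by (apply Rinv_0_lt_compat; nra). nra. Qed.

Lemma SA_G1 x : SA (r1 p) (z0 p) (fun y => - r2 p y) (z0 p) x <= Sig p x.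
Proof. unfold SA, Sig, z0. rewrite Rabs_Ropp, Rabs_R0. pose proof (Rabs_pos (dr1 p x)); pose proof (Rabs_pos (dr2 p x)); lra. Qed.
Lemma SA_G2 x : SA (r2 p) (z0 p) (r1 p) (z0 p) x <= Sig p x.
Proof. unfold SA, Sig, z0. rewrite Rabs_R0. pose proof (Rabs_pos (dr1 p x)); pose proof (Rabs_pos (dr2 p x)); lra. Qed.
Lemma SA_dG1 x : SA (dr1 p) (fun y => - r2 p y) (fun y => - dr2 p y) (fun y => - r1 p y) x <= Sig p x.
Proof. unfold SA, Sig. rewrite !Rabs_Ropp. lra. Qed.
Lemma SA_dG2 x : SA (dr2 p) (r1 p) (dr1 p) (fun y => - r2 p y) x <= Sig p x.
Proof. unfold SA, Sig. rewrite !Rabs_Ropp. lra. Qed.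

Definition KG := exp (M * / p) * (1 + M) * (16 * KR p).
Definition KL := LM p M * (16 * KR p).

Lemma KG_fac : 0 <= M -> 0 <= exp (M * / p) * (1 + M).
Proof. intros. apply Rmult_le_pos; [left; apply exp_pos|lra]. Qed.

Lemma LM_pos : 0 <= M -> 0 <= LM p M.
Proof. intros. unfold LM. apply Rmult_le_pos; [left; apply exp_pos|].
  assert (0 < / p) by (apply Rinv_0_lt_compat; lra). nra. Qed.

Lemma Phi_b1 A B C D a x : Rabs a <= M -> SA A B C D x <= Sig p x ->
  Rabs (Phi p A B C D a x) <= KG * / (1 + x ^ 2).
Proof.
  intros Ha HS. pose proof (Phi_bound p Hp A B C D a M x Ha).
  pose proof (Rabs_pos a). pose proof (KG_fac ltac:(lra)). pose proof (Sig_d1 x).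
  replace (KG * / (1 + x ^ 2)) with (exp (M * / p) * (1 + M) * (16 * KR p * / (1 + x ^ 2))) by (unfold KG; ring).
  eapply Rle_trans. apply H.
  apply Rmult_le_compat_l; auto. lra.
Qed.

Lemma Phi_b2 A B C D a x : Rabs a <= M -> SA A B C D x <= Sig p x ->
  Rabs (Phi p A B C D a x) <= KG.
Proof.
  intros Ha HS. pose proof (Phi_bound p Hp A B C D a M x Ha).
  pose proof (Rabs_pos a). pose proof (KG_fac ltac:(lra)). pose proof (Sig_d2 x).
  unfold KG. eapply Rle_trans. apply H.
  apply Rmult_le_compat_l; auto. lra.
Qed.

Lemma Phi_l1 A B C D a a' x : Rabs a <= M -> Rabs a' <= M -> SA A B C D x <= Sig p x ->
  Rabs (Phi p A B C D a' x - Phi p A B C D a x) <= Rabs (a' - a) * KL * / (1 + x ^ 2).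
Proof.
  intros Ha Ha' HS. pose proof (Phi_lip p Hp A B C D a a' M x Ha Ha').
  pose proof (Rabs_pos a). pose proof (LM_pos ltac:(lra)). pose proof (Sig_decay p Hp x).
  pose proof (Rabs_pos x). pose proof (SA_pos A B C D x).
  eapply Rle_trans. apply H.
  replace (Rabs (a' - a) * KL * / (1 + x ^ 2)) with (Rabs (a' - a) * (LM p M * (16 * KR p * / (1 + x ^ 2)))) by (unfold KL; ring).
  apply Rmult_le_compat_l. apply Rabs_pos. apply Rmult_le_compat_l; auto.
  eapply Rle_trans; [|apply H2]. apply Rmult_le_compat_l; lra.
Qed.

Lemma Phi_l2 A B C D a a' x : Rabs a <= M -> Rabs a' <= M -> SA A B C D x <= Sig p x ->
  Rabs (Phi p A B C D a' x - Phi p A B C D a x) <= Rabs (a' - a) * KL.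
Proof.
  intros Ha Ha' HS. pose proof (Phi_l1 A B C D a a' x Ha Ha' HS).
  pose proof (inv1_le x). pose proof (Rabs_pos a). pose proof (LM_pos ltac:(lra)).
  pose proof KR_nonneg. pose proof (Rabs_pos (a' - a)).
  assert (0 <= Rabs (a' - a) * KL) by (unfold KL; apply Rmult_le_pos; auto; apply Rmult_le_pos; auto).
  eapply Rle_trans. apply H. rewrite <- (Rmult_1_r (Rabs (a' - a) * KL)) at 2.
  apply Rmult_le_compat_l; auto.
Qed.
End Bnds.

Section Om.
Variable alpha : R -> R.
Hypothesis HS : SOS alpha.

Lemma deriv_bounds : exists M0, 0 <= M0 /\ forall t, 0 < t ->
  exp (- M0) <= Derive alpha t <= exp M0.
Proof.
  destruct HS as [_ [_ [_ [_ [_ [Hdp [[M0 HM0] _]]]]]]].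
  exists M0. split.
  - specialize (HM0 1 ltac:(lra)). pose proof (Rabs_pos (ln (Derive alpha 1))). lra.
  - intros t Ht. specialize (HM0 t Ht). specialize (Hdp t Ht).
    rewrite <- (exp_ln (Derive alpha t)) by auto.
    apply Rabs_le_between in HM0. split; apply exp_le'; lra.
Qed.

Lemma alpha_mvt M0 : (forall t, 0 < t -> exp (- M0) <= Derive alpha t <= exp M0) ->
  forall s t, 0 < s -> s < t ->
  exp (- M0) * (t - s) <= alpha t - alpha s <= exp M0 * (t - s).
Proof.
  intros HD s t Hs Hst.
  destruct HS as [_ [_ [Hder _]]].
  destruct (MVT_gen alpha s t (Derive alpha)) as [c [Hc Heq]].
  - intros z Hz. unfold Rmin, Rmax in Hz. destruct (Rle_dec s t); [|lra].
    apply Derive_correct. apply Hder. lra.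
  - intros z Hz. unfold Rmin, Rmax in Hz. destruct (Rle_dec s t); [|lra].
    apply continuity_pt_filterlim. apply (ex_derive_continuous alpha z). apply Hder. lra.
  - unfold Rmin, Rmax in Hc. destruct (Rle_dec s t); [|lra].
    rewrite Heq. specialize (HD c ltac:(lra)). split; nra.
Qed.

Lemma alpha_ratio M0 : (forall t, 0 < t -> exp (- M0) <= Derive alpha t <= exp M0) ->
  forall t, 0 < t -> exp (- M0) * t <= alpha t <= exp M0 * t.
Proof.
  intros HD t Ht. pose proof (alpha_mvt M0 HD) as Hm.
  destruct HS as [Hpos [Hinc [_ [[beta [Hb _]] _]]]].
  pose proof (exp_pos (- M0)) as He1. pose proof (exp_pos M0) as He2.
  split.
  - destruct (Rle_or_lt (exp (- M0) * t) (alpha t)) as [H|H]; auto. exfalso.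
    set (d := exp (- M0) * t - alpha t).
    set (s := Rmin (t / 2) (d / (2 * exp (- M0)))).
    assert (Hs0 : 0 < s). { unfold s, Rmin. destruct (Rle_dec _ _); [lra|].
      apply Rdiv_lt_0_compat; unfold d; lra. }
    assert (Hst : s < t). { unfold s. pose proof (Rmin_l (t/2) (d / (2 * exp (- M0)))). lra. }
    assert (Hsd : exp (- M0) * s <= d / 2).
    { unfold s. pose proof (Rmin_r (t/2) (d / (2 * exp (- M0)))).
      apply Rmult_le_compat_l with (r := exp (- M0)) in H0; [|lra].
      replace (exp (- M0) * (d / (2 * exp (- M0)))) with (d / 2) in H0 by (field; lra). auto. }
    specialize (Hm s t Hs0 Hst). specialize (Hpos s Hs0). unfold d in *. nra.
  - destruct (Rle_or_lt (alpha t) (exp M0 * t)) as [H|H]; auto. exfalso.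
    set (e := (alpha t - exp M0 * t) / 2).
    assert (He : 0 < e) by (unfold e; lra).
    destruct (Hb e He) as [Hbe [Habe _]].
    assert (Hlt : beta e < t).
    { destruct (Rlt_or_le (beta e) t) as [|Hle]; auto. exfalso.
      destruct Hle as [Hle|Heq].
      - specialize (Hinc t (beta e) Ht Hle). rewrite Habe in Hinc. unfold e in Hinc. nra.
      - rewrite <- Heq in Habe. unfold e in Habe. nra. }
    specialize (Hm (beta e) t Hbe Hlt). rewrite Habe in Hm. unfold e in *. nra.
Qed.

Lemma omega_bound : exists M0, 0 <= M0 /\ forall t, 0 < t -> Rabs (exponent alpha t) <= M0.
Proof.
  destruct deriv_bounds as [M0 [HM0 HD]]. exists M0. split; auto.
  intros t Ht. pose proof (alpha_ratio M0 HD t Ht) as [H1 H2].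
  unfold exponent. apply Rabs_le_between.
  assert (exp (- M0) <= alpha t / t).
  { apply (Rmult_le_reg_r t); auto. unfold Rdiv. rewrite Rmult_assoc, Rinv_l; lra. }
  assert (alpha t / t <= exp M0).
  { apply (Rmult_le_reg_r t); auto. unfold Rdiv. rewrite Rmult_assoc, Rinv_l; lra. }
  pose proof (exp_pos (- M0)).
  split.
  - rewrite <- (ln_exp (- M0)) at 1. apply ln_le; auto.
  - rewrite <- (ln_exp M0). apply ln_le; auto; lra.
Qed.

Lemma omega_cont t : 0 < t -> forall eps, 0 < eps -> exists delta, 0 < delta /\
  forall s, 0 < s -> Rabs (s - t) < delta -> Rabs (exponent alpha s - exponent alpha t) < eps.
Proof.
  intros Ht eps Heps.
  destruct HS as [Hpos [_ [Hder _]]].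
  assert (Hc : continuity_pt (exponent alpha) t).
  { apply continuity_pt_filterlim. apply (ex_derive_continuous (exponent alpha) t).
    unfold exponent. destruct (Hder t Ht) as [Hd _]. pose proof (Hpos t Ht).
    auto_derive. repeat split; auto; try lra.
    apply Rdiv_lt_0_compat; lra. }
  destruct (Hc eps Heps) as [d [Hd Hf]].
  exists d. split; auto. intros s Hs Hsd.
  destruct (Req_dec s t) as [->|Hne].
  - unfold Rminus. rewrite Rplus_opp_r, Rabs_R0. auto.
  - apply (Hf s). split; [split; [exact I|auto]|]. exact Hsd.
Qed.
End Om.

Theorem lemma7p3 (p : R) (alpha : R -> R) :
  1 < p -> SOS alpha ->
  in_Cb_V (fun t x =>
    Cmult (Cexp (Cmult (Cmult Ci (RtoC (exponent alpha t)))
                       (Cplus (RtoC x) (Cmult Ci (RtoC (/ p))))))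
          (r_p p x)).
Proof.
  intros Hp HS.
  assert (Hf : (fun t x =>
    Cmult (Cexp (Cmult (Cmult Ci (RtoC (exponent alpha t)))
                       (Cplus (RtoC x) (Cmult Ci (RtoC (/ p))))))
          (r_p p x)) = (fun t x => (G1 p (exponent alpha t) x, G2 p (exponent alpha t) x))).
  { apply functional_extensionality; intros t. apply functional_extensionality; intros x.
    apply c_eq. }
  rewrite Hf. clear Hf.
  destruct (omega_bound alpha HS) as [M [HM0 HM]].
  assert (Hfix : forall a, Rabs a <= M ->
    in_V (fun x => (G1 p a x, G2 p a x)) /\
    Rbar_le (V_norm (fun x => (G1 p a x, G2 p a x))) (Finite (2 * KG p M + 2 * KG p M * PI))).
  { intros a Ha.
    apply (V_bound _ (dG1 p a) (dG2 p a)).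
    - intros x. apply is_derive_G1; auto.
    - intros x. apply is_derive_G2; auto.
    - intros x. apply Phi_b1; auto. apply SA_dG1.
    - intros x. apply Phi_b1; auto. apply SA_dG2.
    - intros x. eapply Rle_trans. apply Cmod_le_sum. simpl.
      pose proof (Phi_b2 p Hp M _ _ _ _ a x Ha (SA_G1 p x)).
      pose proof (Phi_b2 p Hp M _ _ _ _ a x Ha (SA_G2 p x)).
      unfold G1, G2. lra. }
  split; [|split].
  - intros t Ht. apply (Hfix _ (HM t Ht)).
  - exists (2 * KG p M + 2 * KG p M * PI). intros t Ht. apply (Hfix _ (HM t Ht)).
  - intros t Ht eps Heps.
    set (Q := KL p M * (2 + 2 * PI)).
    assert (HQ : 0 <= Q).
    { unfold Q, KL. pose proof PI_RGT_0. apply Rmult_le_pos; [|lra].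
      apply Rmult_le_pos. apply LM_pos; auto. apply KR_nonneg; auto. }
    destruct (omega_cont alpha HS t Ht (eps / (Q + 1))) as [d [Hd Hc]].
    { apply Rdiv_lt_0_compat; lra. }
    exists d. split; auto. intros s Hs Hsd.
    specialize (Hc s Hs Hsd).
    set (a := exponent alpha t) in *. set (a' := exponent alpha s) in *.
    assert (Ha : Rabs a <= M) by (apply HM; auto).
    assert (Ha' : Rabs a' <= M) by (apply HM; auto).
    set (K := Rabs (a' - a) * KL p M).
    assert (HV := V_bound (fun x => Cminus (G1 p a' x, G2 p a' x) (G1 p a x, G2 p a x))
      (fun x => dG1 p a' x - dG1 p a x) (fun x => dG2 p a' x - dG2 p a x) K (2 * K)).
    destruct HV as [_ HV].
    + intros x. apply (is_derive_minus (fun y => G1 p a' y) (fun y => G1 p a y)); apply is_derive_G1; auto.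
    + intros x. apply (is_derive_minus (fun y => G2 p a' y) (fun y => G2 p a y)); apply is_derive_G2; auto.
    + intros x. apply Phi_l1; auto. apply SA_dG1.
    + intros x. apply Phi_l1; auto. apply SA_dG2.
    + intros x. eapply Rle_trans. apply Cmod_le_sum. simpl.
      pose proof (Phi_l2 p Hp M _ _ _ _ a a' x Ha Ha' (SA_G1 p x)).
      pose proof (Phi_l2 p Hp M _ _ _ _ a a' x Ha Ha' (SA_G2 p x)).
      unfold G1, G2, K. unfold Rminus in *. lra.
    + eapply Rbar_le_lt_trans. apply HV. simpl.
      assert (Rabs (a' - a) * Q < eps).
      { apply Rle_lt_trans with (eps / (Q + 1) * Q).
        - apply Rmult_le_compat_r; lra.
        - apply (Rmult_lt_reg_r (Q + 1)); [lra|].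
          replace (eps / (Q + 1) * Q * (Q + 1)) with (eps * Q) by (field; lra). nra. }
      unfold K, Q in *. lra.
Qed.
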